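(* Let $n\geq 3$ and let $l_1,\dots,l_m$ be positive integers. Let $C=C_n(l_1,\dots,l_m)$ be any graph obtained from the cycle $C_n$ by attaching $m$ pendent paths of lengths $l_1,\dots,l_m$ at vertices of $C_n$, and let $SC=SC_n(l_1,\dots,l_m)$ be the graph obtained by attaching all $m$ of these pendent paths at a single vertex $c$ of $C_n$. Then for every integer $k\geq 0$, $$n_k(C)\leq n_k(SC),$$ and for every vertex $v$ on the cycle of $C$, $$n_k(v,C)\leq n_k(c,SC).$$
   Context: A pendent path of length $\ell$ attached at a vertex $w$ consists of $\ell$ new vertices $x_1,\dots,x_\ell$ and edges $wx_1,x_1x_2,\dots,x_{\ell-1}x_\ell$; several pendent paths may be attached at the same vertex. A subtree of a graph $G$ is a subgraph that is a tree (distinguished as subgraphs). $n_k(G)$ is the number of subtrees of $G$ with exactly $k$ vertices (with $n_0(G)=1$), and $n_k(v,G)$ is the number of those containing the vertex $v$. *)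

(* Defs.v *)
From mathcomp Require Import all_boot.
From mathcomp Require Import boolp.
Set Implicit Arguments. Unset Strict Implicit. Unset Printing Implicit Defensive.

(* A simple graph on a finite vertex type V is given by an adjacency relation
   e : rel V (assumed symmetric and irreflexive for the graphs built below).
   Edges are 2-element vertex sets. *)

Definition edges (V : finType) (e : rel V) : {set {set V}} :=
  [set f : {set V} | [exists x : V, exists y : V,
     [&& x != y, e x y & f == [set x; y]]]].

Definition subrel (V : finType) (F : {set {set V}}) : rel V :=
  fun x y => (x != y) && ([set x; y] \in F).

Definition is_subgraph (V : finType) (e : rel V) (S : {set V}) (F : {set {set V}}) : bool :=
  (F \subset edges e) && [forall f in F, f \subset S].

Definition connectedb (V : finType) (S : {set V}) (F : {set {set V}}) : bool :=
  [forall x in S, forall y in S, connect (subrel F) x y].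

Definition has_cycle (V : finType) (S : {set V}) (F : {set {set V}}) : Prop :=
  exists (x : V) (p : seq V),
    [/\ all (fun y => y \in S) (x :: p), uniq (x :: p), 2 <= size p,
        path (subrel F) x p & subrel F (last x p) x].

Definition is_tree (V : finType) (S : {set V}) (F : {set {set V}}) : Prop :=
  [/\ S != set0, connectedb S F & ~ has_cycle S F].

Definition is_subtree (V : finType) (e : rel V) (p : {set V} * {set {set V}}) : bool :=
  is_subgraph e p.1 p.2 && `[< is_tree p.1 p.2 >].

(* n_k(G), with the convention n_0(G) = 1 *)
Definition nk (V : finType) (e : rel V) (k : nat) : nat :=
  if k is 0 then 1 else
  #|[set p : {set V} * {set {set V}} | is_subtree e p && (#|p.1| == k)]|.

Definition nkv (V : finType) (e : rel V) (v : V) (k : nat) : nat :=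
  #|[set p : {set V} * {set {set V}} |
      [&& is_subtree e p, #|p.1| == k & v \in p.1]]|.

(* Vertices: cycle vertices inl x (x : 'I_n) and path vertices inr (i; j),
   the (j+1)-th vertex x_{j+1} of the i-th pendent path (i : 'I_m, j : 'I_(l i)). *)
Definition CPV (n m : nat) (l : 'I_m -> nat) : finType :=
  ('I_n + {i : 'I_m & 'I_(l i)})%type.

(* a i : the cycle vertex at which the i-th pendent path is attached *)
Definition cp_adj (n m : nat) (l : 'I_m -> nat) (a : 'I_m -> 'I_n) : rel (@CPV n m l) :=
  fun u w =>
    match u, w with
    | inl x, inl y => (x.+1 %% n == y) || (y.+1 %% n == x)
    | inl x, inr q => (val (tagged q) == 0) && (a (tag q) == x)
    | inr q, inl y => (val (tagged q) == 0) && (a (tag q) == y)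
    | inr q, inr r => (tag q == tag r) &&
        (((val (tagged q)).+1 == val (tagged r)) || ((val (tagged r)).+1 == val (tagged q)))
    end.

(* Main.v *)
Require Import Defs.
From mathcomp Require Import all_boot.
From mathcomp Require Import boolp.
From mathcomp Require Import zify.
Import Defs.
Set Implicit Arguments. Unset Strict Implicit. Unset Printing Implicit Defensive.

Section G.
Lemma subrel_sym (V : finType) (F : {set {set V}}) : symmetric (subrel F).
Proof. by move=> x y; rewrite /subrel eq_sym setUC. Qed.

Lemma set2_eqP (V : finType) (x y x' y' : V) :
  [set x; y] = [set x'; y'] -> (x = x' /\ y = y') \/ (x = y' /\ y = x').
Proof.
move=> E.
have hx : x \in [set x'; y'] by rewrite -E set21.
have hy : y \in [set x'; y'] by rewrite -E set22.
have hx' : x' \in [set x; y] by rewrite E set21.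
have hy' : y' \in [set x; y] by rewrite E set22.
move: hx hy hx' hy'; rewrite !inE.
case/orP=> /eqP E1; case/orP=> /eqP E2; case/orP=> /eqP E3; case/orP=> /eqP E4;
  subst; auto.
Qed.
End G.

Lemma subrel_adj (V : finType) (e : rel V) (F : {set {set V}}) x y :
  F \subset edges e -> symmetric e -> subrel F x y -> e x y.
Proof.
move=> sF se /andP[nxy /(subsetP sF)]; rewrite inE => /existsP[x' /existsP[y']].
case/and3P=> _ exy /eqP /set2_eqP [[-> ->]|[-> ->]] //; by rewrite se.
Qed.

Lemma cut_lemma (V : finType) (r : rel V) (P : pred V) x y :
  connect r x y -> P x -> ~~ P y -> exists u w, [/\ P u, ~~ P w & r u w].
Proof.
case/connectP=> p pth ->; elim: p x pth => [|z p IH] x /=.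
  by move=> _ ->.
case/andP=> rxz pth Px Pl; case: (boolP (P z)) => Pz.
  exact: (IH z pth Pz Pl).
by exists x, z.
Qed.

Lemma connect_hom (V W : finType) (r : rel V) (r' : rel W) (f : V -> W) :
  (forall u w, r u w -> f u = f w \/ r' (f u) (f w)) ->
  forall x y, connect r x y -> connect r' (f x) (f y).
Proof.
move=> H x y /connectP[p pth ->]; elim: p x pth => //= z p IH x /andP[rxz pth].
apply: connect_trans (IH _ pth).
by case: (H _ _ rxz) => [->|]; [exact: connect0 | exact: connect1].
Qed.

Lemma no_cycle_pot (V : finType) (r : rel V) (phi : V -> nat) (c : seq V) :
  symmetric r ->
  (forall u w, r u w -> phi u = (phi w).+1 \/ phi w = (phi u).+1) ->
  (forall u w1 w2, r u w1 -> r u w2 -> (phi w1).+1 = phi u ->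
      (phi w2).+1 = phi u -> w1 = w2) ->
  uniq c -> 3 <= size c -> cycle r c -> False.
Proof.
move=> sr H1 H2; case: c => [//|x0 c0] uc sc cc.
have : x0 \in x0 :: c0 by rewrite inE eqxx.
move=> /(arg_maxnP phi) [y yin ymax].
case: (rot_to yin) => i s' E.
have uc' : uniq (y :: s') by rewrite -E rot_uniq.
have cc' : cycle r (y :: s') by rewrite -E rot_cycle.
have sc' : 3 <= size (y :: s') by rewrite -E size_rot.
have mem' z : z \in y :: s' -> z \in x0 :: c0 by rewrite -E mem_rot.
case: s' E uc' cc' sc' mem' => [|z s''] //= E uc' cc' sc' mem'.
case: s'' E uc' cc' sc' mem' => [|z' s3] //= E uc' cc' sc' mem'.
rewrite /= rcons_path /= in cc'.
case/and4P: cc' => ryz _ _ rly.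
set w := last z' s3 in rly.
have zin : z \in x0 :: c0 by apply: mem'; rewrite !inE eqxx orbT.
have win : w \in x0 :: c0 by apply: mem'; rewrite /w (in_cons y) (in_cons z) (mem_last z' s3) !orbT.
have pz := ymax _ zin; have pw := ymax _ win.
have lz : (phi z).+1 = phi y.
  by case: (H1 _ _ ryz) => // E'; move: pz => /=; rewrite E' ltnn.
have lw : (phi w).+1 = phi y.
  by case: (H1 _ _ rly) => // E'; move: pw => /=; rewrite E' ltnn.
rewrite sr in rly.
have Ezw := H2 _ _ _ ryz rly lz lw.
move: uc'; rewrite /= !inE => /and3P[_ /negP nz _]; apply: nz.
by rewrite Ezw /w -in_cons (mem_last z' s3).
Qed.

Lemma modS_small n x : x < n -> x.+1 %% n = if x.+1 == n then 0 else x.+1.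
Proof.
move=> xn; case: eqP => [->|ne]; first by rewrite modnn.
by rewrite modn_small //; lia.
Qed.

Definition pc n (y0 : 'I_n) (x : 'I_n) : nat :=
  let b := if y0.+1 == n then 0 else y0.+1 in
  if b <= x then x - b else x + n - b.

Lemma pc_step n (y0 x x' : 'I_n) : 3 <= n -> x.+1 %% n = x' -> x != y0 ->
  pc y0 x' = (pc y0 x).+1.
Proof.
move=> n3 E ne; have ne' : (x : nat) != y0 := ne.
move: E; rewrite modS_small // /pc.
have := ltn_ord x; have := ltn_ord x'; have := ltn_ord y0.
move: ne'; move: (x : nat) (x' : nat) (y0 : nat) => u u' v.
case: (v.+1 =P n) => hv; case: (u.+1 =P n) => hu; rewrite ?hv ?hu ?eqxx /=.
all: move=> *; subst.
all: try (case: ifP; case: ifP); try lia.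
all: rewrite ?ltn0 /=; case: ifP; lia.
Qed.

Lemma predS_inj n (x1 x2 x : 'I_n) : x1.+1 %% n = x -> x2.+1 %% n = x -> x1 = x2.
Proof.
move=> h1 h2; apply: val_inj => /=.
have := ltn_ord x1; have := ltn_ord x2.
move: h1 h2; rewrite !modS_small //.
case: (x1.+1 =P n) => e1; case: (x2.+1 =P n) => e2; lia.
Qed.

Lemma ord_pos n (x : 'I_n) : 0 < n.
Proof. by apply: leq_ltn_trans (ltn_ord x). Qed.

Definition nxt n (x : 'I_n) : 'I_n := Ordinal (ltn_pmod x.+1 (ord_pos x)).

Lemma adj_sym n m l (a : 'I_m -> 'I_n) : symmetric (@cp_adj n m l a).
Proof.
move=> [x|q] [y|r] //=; first by rewrite orbC.
by rewrite eq_sym orbC.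
Qed.

Definition phi n m l (a : 'I_m -> 'I_n) (y0 : 'I_n) (v : @CPV n m l) : nat :=
  match v with
  | inl x => pc y0 x
  | inr q => pc y0 (a (tag q)) + val (tagged q) + 1
  end.

Lemma cyc_all n m l (a : 'I_m -> 'I_n) (S : {set @CPV n m l}) (F : {set {set @CPV n m l}}) :
  3 <= n -> F \subset edges (cp_adj a) -> has_cycle S F ->
  forall y : 'I_n, [set inl y; inl (nxt y)] \in F.
Proof.
move=> n3 sF [x [p [_ up sp pth lst]]] y0; apply/negPn/negP => nin.
have Hadj u w : subrel F u w -> cp_adj a u w.
  by move=> h; apply: (subrel_adj sF (@adj_sym n m l a) h).
have Hex x1 x' : subrel F (inl x1) (inl x') -> x1.+1 %% n = x' -> x1 != y0.
  move=> /andP[_ inF] E; apply/eqP => exy; subst x1; move/negP: nin; apply.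
  have -> : nxt y0 = x' by apply: val_inj.
  exact: inF.
have low_inl x1 w : subrel F (inl x1) w -> (phi a y0 w).+1 = pc y0 x1 ->
    exists x', w = inl x' /\ x'.+1 %% n = x1.
  case: w => [x'|q] s1; have := Hadj _ _ s1 => /=.
    case/orP => /eqP E.
      by rewrite (pc_step n3 E (Hex _ _ s1 E)); lia.
    by move=> _; exists x'.
  by case/andP => /eqP -> /eqP ->; lia.
have low_inr q w : subrel F (inr q) w -> (phi a y0 w).+1 = phi a y0 (inr q) ->
    if val (tagged q) == 0 then w = inl (a (tag q))
    else exists r, [/\ w = inr r, tag r = tag q & (val (tagged r)).+1 = val (tagged q)].
  case: q => iq jq; case: w => [y|[ir jr]] s1; have := Hadj _ _ s1 => /=.
    by case/andP => /eqP -> /eqP ->; rewrite eqxx.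
  case/andP => /eqP tq; subst ir => E1 E2.
  have E3 : jr.+1 = jq by lia.
  case: ifP => [/eqP E0|_]; first by lia.
  by exists (existT _ iq jr).
apply: (@no_cycle_pot _ (subrel F) (phi a y0) (x :: p)) => //.
- exact: subrel_sym.
- move=> u w suw; have := Hadj _ _ suw.
  case: u w suw => [x1|q] [x'|r] suw /=.
  + case/orP => /eqP E.
      by right; apply: pc_step => //; apply: Hex suw E.
    left; apply: pc_step => //; apply: (Hex x' x1) => //.
    by rewrite subrel_sym.
  + by case/andP => /eqP -> /eqP ->; right; lia.
  + by case/andP => /eqP -> /eqP ->; left; lia.
  + case: q r suw => [iq jq] [ir jr] suw /=.
    by case/andP => /eqP tq; subst ir; case/orP => /eqP E; lia.
- move=> u w1 w2 s1 s2 l1 l2; case: u s1 s2 l1 l2 => [x1|q] s1 s2 l1 l2.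
    have [x1' [-> E1]] := low_inl _ _ s1 l1.
    have [x2' [-> E2]] := low_inl _ _ s2 l2.
    by rewrite (predS_inj E1 E2).
  have := low_inr _ _ s1 l1; have := low_inr _ _ s2 l2.
  case: ifP => _; first by move=> -> ->.
  case=> r2 [-> t2 v2] [r1 [-> t1 v1]].
  case: r1 r2 t1 t2 v1 v2 => i1 j1 [i2 j2] /= t1 t2 v1 v2.
  subst i1 i2; congr inr; have -> : j1 = j2 by apply: val_inj => /=; lia.
  done.
- by rewrite /= rcons_path pth lst.
Qed.

Lemma iter_nxt n (x0 : 'I_n) k : val x0 = 0 -> val (iter k (@nxt n) x0) = k %% n.
Proof.
move=> h0; elim: k => [|k IH] /=; first by rewrite h0 mod0n.
by rewrite IH -addn1 modnDml addn1.
Qed.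

Lemma traject_val n (x0 : 'I_n) k : val x0 = 0 -> k <= n ->
  map val (traject (@nxt n) x0 k) = iota 0 k.
Proof.
move=> h0; elim: k => [|k IH] kn //.
rewrite trajectSr map_rcons IH ?(ltnW kn) // iter_nxt // modn_small //.
by rewrite -addn1 iotaD cats1.
Qed.

Lemma cyc_exhibit n m l (a : 'I_m -> 'I_n) (S : {set @CPV n m l})
    (F : {set {set @CPV n m l}}) :
  3 <= n -> (forall y : 'I_n, [set inl y; inl (nxt y)] \in F) ->
  (forall f, f \in F -> f \subset S) -> has_cycle S F.
Proof.
move=> n3 hF hS.
have n0 : 0 < n by lia.
pose x0 : 'I_n := Ordinal n0.
have nxt_ne y : inl y != inl (nxt y) :> @CPV n m l.
  apply/eqP => -[] /(congr1 val) /=; rewrite modS_small ?ltn_ord //.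
  by have := ltn_ord y; case: ifP; lia.
have edge y : subrel F (inl y) (inl (nxt y)) by rewrite /subrel nxt_ne hF.
have inS y : inl y \in S.
  by apply: (subsetP (hS _ (hF y))); rewrite !inE eqxx.
have En : n = (n - 1).+1 by lia.
have uq : uniq (traject (@nxt n) x0 n).
  by rewrite -(map_inj_uniq val_inj) traject_val // iota_uniq.
exists (inl x0), [seq inl i | i <- traject (@nxt n) (nxt x0) (n - 1)]; split.
- by apply/allP => z /= /orP[/eqP ->|/mapP[y _ ->]].
- rewrite -map_cons map_inj_uniq; last by move=> ? ? [].
  by rewrite -trajectS -En.
- by rewrite size_map size_traject; lia.
- rewrite path_map; apply: sub_path (fpath_traject _ _ _).
  by move=> u w /= /eqP <-.
- rewrite last_map last_traject.
  have E0 : nxt (iter (n - 1) (@nxt n) x0) = x0.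
    apply: val_inj => /=; rewrite iter_nxt // -addn1 modnDml addn1 -En modnn.
    done.
  by have := edge (iter (n - 1) (@nxt n) x0); rewrite E0.
Qed.

Lemma imset_set2 (T U : finType) (f : T -> U) x y : f @: [set x; y] = [set f x; f y].
Proof. by rewrite imsetU1 imset_set1. Qed.

Definition rot n (r : nat) (x : 'I_n) : 'I_n := Ordinal (ltn_pmod (x + r) (ord_pos x)).

Lemma rot_inj n r : injective (@rot n r).
Proof.
move=> x y /(congr1 val) /= /eqP; rewrite eqn_modDr !modn_small ?ltn_ord //.
by move/eqP/val_inj.
Qed.

Lemma rot_nxt n r (x : 'I_n) : rot r (nxt x) = nxt (rot r x).
Proof. by apply: val_inj => /=; rewrite modnDml -[((x + r) %% n).+1]addn1 modnDml addnAC addn1. Qed.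

Lemma nxt_val n (x y : 'I_n) : (x.+1 %% n == y) = (nxt x == y).
Proof. by []. Qed.

Lemma cp_inl n m l (a b : 'I_m -> 'I_n) x y :
  @cp_adj n m l a (inl x) (inl y) = @cp_adj n m l b (inl x) (inl y).
Proof. by []. Qed.

Lemma cp_rot n m l (a : 'I_m -> 'I_n) r x y :
  @cp_adj n m l a (inl (rot r x)) (inl (rot r y)) = @cp_adj n m l a (inl x) (inl y).
Proof.
have E u v : @cp_adj n m l a (inl u) (inl v) = (nxt u == v) || (nxt v == u) by [].
by rewrite !E -!rot_nxt !(inj_eq (@rot_inj n r)).
Qed.

Definition psi n m l (r : nat) (v : @CPV n m l) : @CPV n m l :=
  match v with inl x => inl (rot r x) | inr q => inr q end.

Lemma psi_inj n m l r : injective (@psi n m l r).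
Proof.
move=> [x|q] [y|q'] //= E; injection E => E'.
  have E2 : rot r x = rot r y by apply: val_inj.
  by rewrite (rot_inj E2).
Qed.

Definition hc n m l (c : 'I_n) (v : @CPV n m l) : @CPV n m l :=
  match v with inl _ => inl c | inr q => inr q end.

Definition isr n m l (v : @CPV n m l) : bool := if v is inr _ then true else false.

Definition g n m l (r : nat) (c : 'I_n) (f : {set @CPV n m l}) : {set @CPV n m l} :=
  if [exists q, inr q \in f] then hc c @: f else psi r @: f.

Lemma g_set2 n m l r c (x y : @CPV n m l) :
  g r c [set x; y] = if isr x || isr y then [set hc c x; hc c y] else [set psi r x; psi r y].
Proof.
rewrite /g; case: ifP => [/existsP[q]|ne].
  by rewrite !inE => /orP[] /eqP <-; rewrite /= ?orbT imset_set2.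
have -> : isr x || isr y = false.
  apply: negbTE; apply: contraFN ne; case: x => [x|q] /=.
    by case: y => // q _; apply/existsP; exists q; rewrite !inE eqxx orbT.
  by move=> _; apply/existsP; exists q; rewrite !inE eqxx.
by rewrite imset_set2.
Qed.

Lemma sig_eq m (l : 'I_m -> nat) (q1 q2 : {i : 'I_m & 'I_(l i)}) :
  tag q1 = tag q2 -> (tagged q1 : nat) = tagged q2 -> q1 = q2.
Proof.
case: q1 q2 => i1 j1 [i2 j2] /= ti; subst i2 => vj.
by have -> : j1 = j2 by apply: val_inj.
Qed.

Lemma edge_cases n m l (a : 'I_m -> 'I_n) f :
  f \in edges (@cp_adj n m l a) ->
  [\/ exists x, f = [set inl x; inl (nxt x)],
      exists q : {i : 'I_m & 'I_(l i)}, val (tagged q) = 0 /\ f = [set inl (a (tag q)); inr q]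
    | exists q q' : {i : 'I_m & 'I_(l i)}, [/\ tag q = tag q', (val (tagged q)).+1 = val (tagged q') &
                      f = [set inr q; inr q']]].
Proof.
rewrite inE => /existsP[x /existsP[y /and3P[nxy exy /eqP ->]]].
case: x y nxy exy => [x|q] [y|q'] nxy /=.
- case/orP => /eqP E; apply: Or31.
    by exists x; congr [set _; inl _]; apply: val_inj.
  by exists y; rewrite setUC; congr [set _; inl _]; apply: val_inj.
- by case/andP => /eqP v0 /eqP ax; apply: Or32; exists q'; rewrite ax.
- by case/andP => /eqP v0 /eqP ax; apply: Or32; exists q; rewrite ax setUC.
- case/andP => /eqP tq /orP[] /eqP E; apply: Or33.
    by exists q, q'.
  by exists q', q; rewrite setUC.
Qed.

Lemma cyc_edge n m l (a : 'I_m -> 'I_n) x :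
  3 <= n -> [set inl x; inl (nxt x)] \in edges (@cp_adj n m l a).
Proof.
move=> n3; rewrite inE; apply/existsP; exists (inl x); apply/existsP; exists (inl (nxt x)).
rewrite eqxx andbT.
have -> : @cp_adj n m l a (inl x) (inl (nxt x)) by rewrite /= eqxx.
rewrite andbT; apply/eqP => -[] /(congr1 val) /=; rewrite modS_small ?ltn_ord //.
by have := ltn_ord x; case: ifP; lia.
Qed.

Lemma att_edge n m l (a : 'I_m -> 'I_n) (q : {i : 'I_m & 'I_(l i)}) :
  val (tagged q) = 0 -> [set inl (a (tag q)); inr q] \in edges (@cp_adj n m l a).
Proof.
move=> v0; rewrite inE; apply/existsP; exists (inl (a (tag q))); apply/existsP; exists (inr q).
by rewrite eqxx /= v0 !eqxx.
Qed.

Lemma int_edge n m l (a : 'I_m -> 'I_n) (q q' : {i : 'I_m & 'I_(l i)}) :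
  tag q = tag q' -> (val (tagged q)).+1 = val (tagged q') ->
  [set inr q; inr q'] \in edges (@cp_adj n m l a).
Proof.
move=> t v; rewrite inE; apply/existsP; exists (inr q); apply/existsP; exists (inr q').
rewrite eqxx andbT; case: q q' t v => [i j] [i' j'] /= t v; subst i'.
rewrite eqxx v eqxx andbT /=; apply/eqP => E.
move: (congr1 (fun v : @CPV n m l => if v is inr q then val (tagged q) else 0) E) => /=.
lia.
Qed.

Lemma g_cyc n m l r c (x y : 'I_n) :
  @g n m l r c [set inl x; inl y] = psi r @: [set inl x; inl y].
Proof. by rewrite g_set2 /= imset_set2. Qed.

Lemma g_att n m l r c (x : 'I_n) (q : {i : 'I_m & 'I_(l i)}) :
  @g n m l r c [set inl x; inr q] = [set inl c; inr q].
Proof. by rewrite g_set2. Qed.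

Lemma g_int n m l r (c : 'I_n) (q q' : {i : 'I_m & 'I_(l i)}) :
  @g n m l r c [set inr q; inr q'] = [set inr q; inr q'].
Proof. by rewrite g_set2. Qed.

Lemma g_edge n m l (a : 'I_m -> 'I_n) r c f :
  3 <= n -> f \in edges (@cp_adj n m l a) ->
  g r c f \in edges (@cp_adj n m l (fun _ => c)).
Proof.
move=> n3; case/edge_cases => [[x ->]|[q [v0 ->]]|[q [q' [t v ->]]]]; rewrite g_set2 /=.
- by rewrite rot_nxt; apply: cyc_edge.
- exact: (@att_edge n m l (fun _ => c) q v0).
- exact: int_edge.
Qed.

Lemma g_inj n m l (a : 'I_m -> 'I_n) r c f1 f2 :
  f1 \in edges (@cp_adj n m l a) -> f2 \in edges (@cp_adj n m l a) ->
  g r c f1 = g r c f2 -> f1 = f2.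
Proof.
case/edge_cases => [[x1 ->]|[q1 [_ ->]]|[q1 [q1' [_ _ ->]]]];
case/edge_cases => [[x2 ->]|[q2 [_ ->]]|[q2 [q2' [_ _ ->]]]];
rewrite ?g_cyc ?g_att ?g_int;
try (move/(imset_inj (@psi_inj n m l r)) => //);
rewrite ?imset_set2; try (by move/set2_eqP => [[E1 E2]|[E1 E2]]).
move/set2_eqP => [[E1 E2]|[E1 E2]] //.
by case: E2 => ->.
by [].
Qed.

Definition proj n m l (a : 'I_m -> 'I_n) r (v : @CPV n m l) : @CPV n m l :=
  match v with inl z => inl (rot r z) | inr q => inl (rot r (a (tag q))) end.

Lemma Phi_tree n m l (a : 'I_m -> 'I_n) (c : 'I_n) r
    (S : {set @CPV n m l}) (F : {set {set @CPV n m l}}) (u : 'I_n) :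
  3 <= n -> is_subtree (cp_adj a) (S, F) -> inl u \in S -> rot r u = c ->
  is_subtree (cp_adj (fun _ : 'I_m => c)) (psi r @: S, g r c @: F).
Proof.
move=> n3 /andP[/andP[sF FS] /asboolP[Sne conn acyc]] uS ruc.
have FS' : forall f, f \in F -> f \subset S by move/forall_inP: FS.
have Hadj x y : subrel F x y -> cp_adj a x y.
  by move=> h; apply: (subrel_adj sF (@adj_sym n m l a) h).
have conn' x y : x \in S -> y \in S -> connect (subrel F) x y.
  by move=> xS yS; move/forall_inP: conn => /(_ x xS) /forall_inP /(_ y yS).
have sF' : g r c @: F \subset edges (cp_adj (fun _ : 'I_m => c)).
  by apply/subsetP => _ /imsetP[f fF ->]; apply: g_edge => //; apply: (subsetP sF).
have psiS x : x \in S -> psi r x \in psi r @: S by move=> xS; apply: imset_f.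
have hcS x : x \in S -> hc c x \in psi r @: S.
  case: x => [x|q] xS /=; last exact: (psiS _ xS).
  by rewrite -ruc; apply: (psiS _ uS).
have FS'' : forall f', f' \in g r c @: F -> f' \subset psi r @: S.
  move=> _ /imsetP[f fF ->].
  have fS := FS' _ fF.
  have in1 x y : [set x; y] \subset S -> x \in S.
    by move/subsetP; apply; rewrite !inE eqxx.
  have in2 x y : [set x; y] \subset S -> y \in S.
    by move/subsetP; apply; rewrite !inE eqxx orbT.
  case: (edge_cases (subsetP sF _ fF)) fS => [[x ->]|[q [_ ->]]|[q [q' [_ _ ->]]]] fS.
  - rewrite g_cyc; apply/subsetP => _ /imsetP[z zin ->]; apply: psiS.
    exact: (subsetP fS).
  - rewrite g_att; apply/subsetP => z; rewrite !inE => /orP[] /eqP ->.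
      exact: (hcS _ (in1 _ _ fS)).
    exact: (hcS _ (in2 _ _ fS)).
  - rewrite g_int; apply/subsetP => z; rewrite !inE => /orP[] /eqP ->.
      exact: (hcS _ (in1 _ _ fS)).
    exact: (hcS _ (in2 _ _ fS)).
apply/andP; split; first by apply/andP; split => //; apply/forall_inP.
apply/asboolP; split.
- case/set0Pn: Sne => x xS; apply/set0Pn; exists (psi r x); exact: psiS.
-
  have toC : forall x, x \in S -> connect (subrel (g r c @: F)) (psi r x) (inl c).
    case=> [y|q] yS.
      suff : connect (subrel (g r c @: F)) (proj a r (inl y)) (proj a r (inl u)).
        by rewrite /= ruc.
      apply: connect_hom (conn' _ _ yS uS).
      move=> v w svw; have := Hadj _ _ svw.
      case: v w svw => [v|q] [w|q'] svw.
      + move=> _; right; rewrite /= /subrel.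
        have -> : [set inl (rot r v); inl (rot r w)] = @g n m l r c [set inl v; inl w].
          by rewrite g_cyc imset_set2.
        rewrite imset_f; last by case/andP: svw.
        case/andP: svw => ne _; rewrite andbT; apply: contra ne => /eqP [] E.
        have E' : rot r v = rot r w by apply: val_inj.
        by rewrite (rot_inj E').
      + by case/andP => _ /eqP E; left; rewrite /= E.
      + by case/andP => _ /eqP E; left; rewrite /= E.
      + by case/andP => /eqP t _; left; rewrite /= t.
    suff H : forall k (q : {i : 'I_m & 'I_(l i)}), val (tagged q) < k -> inr q \in S ->
        connect (subrel (g r c @: F)) (inr q) (inl c).
      exact: (H _ q (ltnSn _) yS).
    elim=> [//|k IH] {}q qk {}yS.
    pose P := fun v : @CPV n m l => if v is inr q1 then
        (tag q1 == tag q) && ((tagged q : nat) <= tagged q1) else false.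
    have Pq : P (inr q) by rewrite /P eqxx leqnn.
    have [v [w [Pv Pw svw]]] := @cut_lemma _ (subrel F) P _ _ (conn' _ _ yS uS) Pq isT.
    case: v Pv svw => [//|q1] /= /andP[/eqP t1 le1] svw.
    have := Hadj _ _ svw.
    case: w Pw svw => [z|q2] Pw svw /=.
    + case/andP => /eqP v0 _.
      have E : q1 = q by apply: sig_eq => //; lia.
      subst q1; apply: connect1; rewrite /subrel /=.
      have -> : [set inr q; inl c] = @g n m l r c [set inl z; inr q].
        by rewrite g_att setUC.
      rewrite imset_f //; first by rewrite setUC; case/andP: svw.
    + case/andP => /eqP t2 HH.
      have tq : tag q2 == tag q by rewrite -t2 t1.
      move: Pw; rewrite /P tq /= -ltnNge => lt2.
      have E : (tagged q2 : nat).+1 = tagged q1.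
        have le1' : (tagged q : nat) <= tagged q1 := le1.
        have lt2' : (tagged q2 : nat) < tagged q := lt2.
        case/orP: HH => /eqP E //.
        move: lt2; rewrite -E => lt2.
        by have := leq_ltn_trans le1 (ltn_trans (ltnSn _) lt2); rewrite ltnn.
      have E' : q1 = q by apply: sig_eq => //; lia.
      subst q1.
      have inF : [set inr q; inr q2] \in F by case/andP: svw.
      apply: connect_trans (IH q2 _ _).
      * apply: connect1; rewrite /subrel; case/andP: svw => -> _ /=.
        by rewrite -(g_int r c); apply: imset_f.
      * by rewrite -ltnS E.
      * by apply: (subsetP (FS' _ inF)); rewrite !inE eqxx orbT.
  apply/forall_inP => _ /imsetP[x xS ->]; apply/forall_inP => _ /imsetP[y yS ->].
  apply: connect_trans (toC x xS) _.
  by rewrite (sym_connect_sym (@subrel_sym _ _)); apply: toC.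
-
  move=> hcyc; have allc := cyc_all n3 sF' hcyc.
  apply: acyc; apply: (cyc_exhibit a n3 _ FS') => y.
  case/imsetP: (allc (rot r y)) => f fF Ef.
  move: Ef; case: (edge_cases (subsetP sF _ fF)) => [[x Ex]|[q [_ Ex]]|[q [q' [_ _ Ex]]]];
    subst f.
  + rewrite g_cyc -rot_nxt.
    have -> : [set inl (rot r y); inl (rot r (nxt y))] = @psi n m l r @: [set inl y; inl (nxt y)].
      by rewrite imset_set2.
    by move/(imset_inj (@psi_inj n m l r)) => ->.

  + by rewrite g_att => /set2_eqP [[E1 E2]|[E1 E2]].
  + by rewrite g_int => /set2_eqP [[E1 E2]|[E1 E2]].
Qed.

Lemma imset_in_inj (T U : finType) (h : T -> U) (D : {pred T}) (A B : {set T}) :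
  {in D &, injective h} -> {subset A <= D} -> {subset B <= D} ->
  h @: A = h @: B -> A = B.
Proof.
move=> hi sA sB E; apply/setP => x; apply/idP/idP => xin.
  have : h x \in h @: B by rewrite -E imset_f.
  by case/imsetP => y yB E'; rewrite (hi x y (sA x xin) (sB y yB) E').
have : h x \in h @: A by rewrite E imset_f.
by case/imsetP => y yA E'; rewrite (hi x y (sB x xin) (sA y yA) E').
Qed.

Lemma Phi_inj n m l (a : 'I_m -> 'I_n) r c (T1 T2 : {set @CPV n m l} * {set {set @CPV n m l}}) :
  T1.2 \subset edges (cp_adj a) -> T2.2 \subset edges (cp_adj a) ->
  (psi r @: T1.1, g r c @: T1.2) = (psi r @: T2.1, g r c @: T2.2) -> T1 = T2.
Proof.
case: T1 T2 => S1 F1 [S2 F2] /= s1 s2 [] ES EF.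
have ES' : S1 = S2 by apply: (imset_inj (@psi_inj n m l r)).
rewrite ES'; congr pair.
apply: (imset_in_inj (D := mem (edges (cp_adj a)))) EF.
- by move=> f1 f2 h1 h2; apply: (g_inj (a := a)); [exact: h1 | exact: h2].
- by move=> f; apply: (subsetP s1).
- by move=> f; apply: (subsetP s2).
Qed.

Definition Kb n m l (S : {set @CPV n m l}) : bool :=
  [exists x, inl x \in S] && [exists q, inr q \in S].

Definition rr n m l (a : 'I_m -> 'I_n) (c : 'I_n) (S : {set @CPV n m l}) : nat :=
  if [pick q | (val (tagged q) == 0) && (inr q \in S)] is Some q then c + n - a (tag q) else 0.

Definition PhiF n m l (a : 'I_m -> 'I_n) (c : 'I_n)
    (T : {set @CPV n m l} * {set {set @CPV n m l}}) :=
  if Kb T.1 then (psi (rr a c T.1) @: T.1, g (rr a c T.1) c @: T.2) else T.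

Lemma inr_psi n m l r (S : {set @CPV n m l}) q : (inr q \in psi r @: S) = (inr q \in S).
Proof.
apply/imsetP/idP => [[[x|q'] xS //= [->]] //|qS].
by exists (inr q).
Qed.

Lemma inl_psi n m l r (S : {set @CPV n m l}) :
  [exists x, inl x \in psi r @: S] = [exists x, inl x \in S].
Proof.
apply/existsP/existsP => [[x /imsetP[[y|q] yS //= _]]|[x xS]].
  by exists y.
by exists (rot r x); apply/imsetP; exists (inl x).
Qed.

Lemma Kb_psi n m l r (S : {set @CPV n m l}) : Kb (psi r @: S) = Kb S.
Proof.
rewrite /Kb inl_psi; congr andb; apply/existsP/existsP => [[q]|[q]]; exists q.
  by rewrite -(inr_psi r).
by rewrite inr_psi.
Qed.

Lemma rr_psi n m l (a : 'I_m -> 'I_n) c r (S : {set @CPV n m l}) :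
  rr a c (psi r @: S) = rr a c S.
Proof.
by rewrite /rr (eq_pick (Q := fun q => (val (tagged q) == 0) && (inr q \in S))) //
  => q; rewrite inr_psi.
Qed.

Lemma attach_in n m l (a : 'I_m -> 'I_n) (S : {set @CPV n m l}) F x0 q0 :
  is_subtree (cp_adj a) (S, F) -> inl x0 \in S -> inr q0 \in S ->
  exists q1 : {i : 'I_m & 'I_(l i)}, [/\ tag q1 = tag q0, (tagged q1 : nat) = 0, inr q1 \in S &
                 inl (a (tag q0)) \in S].
Proof.
move=> /andP[/andP[sF FS] /asboolP[Sne conn acyc]] xS qS.
have FS' : forall f, f \in F -> f \subset S by move/forall_inP: FS.
have Hadj x y : subrel F x y -> cp_adj a x y.
  by move=> h; apply: (subrel_adj sF (@adj_sym n m l a) h).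
have cn : connect (subrel F) (inr q0) (inl x0).
  by move/forall_inP: conn => /(_ _ qS) /forall_inP /(_ _ xS).
pose P := fun v : @CPV n m l => if v is inr q then tag q == tag q0 else false.
have Pq : P (inr q0) by rewrite /P eqxx.
have [v [w [Pv Pw svw]]] := @cut_lemma _ (subrel F) P _ _ cn Pq isT.
case: v Pv svw => [//|q1] /= /eqP t1 svw.
have := Hadj _ _ svw; case: w Pw svw => [z|q2] Pw svw /=.
- case/andP => /eqP v0 /eqP az.
  have inF : [set inr q1; inl z] \in F by case/andP: svw.
  exists q1; split => //.
    by apply: (subsetP (FS' _ inF)); rewrite !inE eqxx.
  by rewrite -t1 az; apply: (subsetP (FS' _ inF)); rewrite !inE eqxx orbT.
- case/andP => /eqP t2 _; move: Pw; rewrite /P -t2 t1 eqxx //.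
Qed.

Lemma rot_to_c n (x c : 'I_n) : rot (c + n - x) x = c.
Proof.
apply: val_inj => /=.
have -> : x + (c + n - x) = c + n by have := ltn_ord x; lia.
by rewrite modnDr modn_small.
Qed.

Lemma PhiF_tree n m l (a : 'I_m -> 'I_n) c (T : {set @CPV n m l} * {set {set @CPV n m l}}) :
  3 <= n -> is_subtree (cp_adj a) T -> is_subtree (cp_adj (fun _ : 'I_m => c)) (PhiF a c T).
Proof.
case: T => S F n3 st; rewrite /PhiF /=.
case: ifP => K.
  case/andP: K => /existsP[x0 xS] /existsP[q0 qS].
  have [q1 [_ v1 q1S _]] := attach_in st xS qS.
  rewrite /rr; case: pickP => [q /andP[/eqP v0 qS']|/(_ q1)].
    have [_ [_ _ _ aS]] := attach_in st xS qS'.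
    by apply: (Phi_tree n3 st aS); apply: rot_to_c.
  by rewrite q1S andbT; have -> : (val (tagged q1) == 0) by apply/eqP; exact: v1.
move: st => /andP[/andP[sF FS] tr]; apply/andP; split => //; apply/andP; split => //.
apply/subsetP => f fF.
case: (edge_cases (subsetP sF _ fF)) => [[x ->]|[q [_ Ef]]|[q [q' [t v ->]]]].
- exact: cyc_edge.
- subst f; exfalso; move/negP: K; apply.
  have FS' : forall f, f \in F -> f \subset S by move/forall_inP: FS.
  have fS := FS' _ fF.
  apply/andP; split; [apply/existsP; exists (a (tag q)) | apply/existsP; exists q];
  by apply: (subsetP fS); rewrite !inE eqxx ?orbT.
- exact: int_edge.
Qed.

Unset Implicit Arguments.

Theorem lemma3 (n m : nat) (l : 'I_m -> nat) (a : 'I_m -> 'I_n) (c : 'I_n) :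
  3 <= n -> (forall i, 0 < l i) ->
  forall k : nat,
    nk (@cp_adj n m l a) k <= nk (@cp_adj n m l (fun _ => c)) k /\
    (forall v : 'I_n,
       nkv (@cp_adj n m l a) (inl v) k <= nkv (@cp_adj n m l (fun _ => c)) (inl c) k).
Proof.
move=> n3 lpos k; split.
- case: k => [//|k]; rewrite /nk.
  set A := [set T : {set @CPV n m l} * {set {set @CPV n m l}} | _].
  have inj : {in A &, injective (PhiF a c)}.
    move=> [S1 F1] [S2 F2]; rewrite !inE => /andP[st1 _] /andP[st2 _].
    have e1 : F1 \subset edges (cp_adj a) by case/andP: st1 => /andP[].
    have e2 : F2 \subset edges (cp_adj a) by case/andP: st2 => /andP[].
    rewrite /PhiF /=; case K1: (Kb S1); case K2: (Kb S2) => //.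
    + move=> E.
      have Er : rr a c S1 = rr a c S2.
        rewrite -(rr_psi a c (rr a c S1) S1) -(rr_psi a c (rr a c S2) S2).
        by case: E => ->.
      move: E; rewrite -Er => E'.
      exact: (@Phi_inj n m l a (rr a c S1) c (S1, F1) (S2, F2) e1 e2 E').
    + move=> E; have : Kb S2 = Kb S1 by case: E => <- _; rewrite Kb_psi.
      by rewrite K1 K2.
    + move=> E; have : Kb S1 = Kb S2 by case: E => -> _; rewrite Kb_psi.
      by rewrite K1 K2.
  rewrite -(card_in_imset inj); apply: subset_leq_card.
  apply/subsetP => _ /imsetP[T TA ->]; rewrite inE in TA; case/andP: TA => st sz.
  rewrite inE PhiF_tree //=.
  rewrite /PhiF; case: ifP => _ //=; rewrite card_imset //; exact: psi_inj.
- move=> v; rewrite /nkv.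
  set r := c + n - v.
  set A := [set T : {set @CPV n m l} * {set {set @CPV n m l}} | _].
  pose Phi := fun T : {set @CPV n m l} * {set {set @CPV n m l}} =>
    (psi r @: T.1, g r c @: T.2).
  have inj : {in A &, injective Phi}.
    move=> T1 T2; rewrite !inE => /and3P[st1 _ _] /and3P[st2 _ _].
    have e1 : T1.2 \subset edges (cp_adj a) by case/andP: st1 => /andP[].
    have e2 : T2.2 \subset edges (cp_adj a) by case/andP: st2 => /andP[].
    exact: (Phi_inj e1 e2).
  rewrite -(card_in_imset inj); apply: subset_leq_card.
  apply/subsetP => _ /imsetP[[S F] TA ->]; rewrite inE in TA; case/and3P: TA => st sz vS.
  rewrite inE /Phi /= (Phi_tree n3 st vS (rot_to_c v c)) /=.
  rewrite card_imset; last exact: psi_inj.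
  rewrite sz /=; rewrite -{1}(rot_to_c v c).
  exact: (imset_f (psi r) vS).
Qed.
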